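(* Let $G$ be a finite group and $p$ a prime. Then $|G|_{p'}\,\chi(\mathcal F^*_G)$ is an integer.
   Context: $|G|_{p'}$ is the largest divisor of $|G|$ prime to $p$. $\mathcal F^*_G$ is the Frobenius (fusion) category of nonidentity $p$-subgroups: objects are the nonidentity $p$-subgroups of $G$, morphisms $\mathcal F^*_G(H,K)=C_G(H)\backslash N_G(H,K)$ with $N_G(H,K)=\{g\in G: g^{-1}Hg\le K\}$, composition induced by multiplication. $\chi$ is Leinster's Euler characteristic: for a finite category $\mathcal C$, a weighting is $k^\bullet$ with $\sum_b|\mathcal C(a,b)|k^b=1$ for all $a$, a coweighting is $k_\bullet$ with $\sum_ak_a|\mathcal C(a,b)|=1$ for all $b$, and if both exist $\chi(\mathcal C)=\sum_bk^b=\sum_ak_a$ (this exists for $\mathcal F^*_G$). *)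

(* Defs.v *)
From mathcomp Require Import all_boot all_order all_algebra all_fingroup all_solvable.
Set Implicit Arguments. Unset Strict Implicit. Unset Printing Implicit Defensive.
Import GRing.Theory Num.Theory.

Local Open Scope group_scope.

Definition Fobj (gT : finGroupType) (G : {group gT}) (p : nat) : pred {group gT} :=
  [pred H : {group gT} | [&& H \subset G, p.-group H & H :!=: 1]].

(* N_G(H,K) = { g in G | g^-1 H g <= K }  (H :^ g = g^-1 H g in mathcomp). *)
Definition Ntrans (gT : finGroupType) (G H K : {set gT}) : {set gT} :=
  [set g in G | H :^ g \subset K].

(* |F*_G(H,K)| = number of cosets C_G(H) g, g in N_G(H,K), i.e. |C_G(H)\N_G(H,K)|. *)
Definition Fhom (gT : finGroupType) (G H K : {set gT}) : nat :=
  #|rcosets 'C_G(H) (Ntrans G H K)|.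

Definition is_weighting (gT : finGroupType) (G : {group gT}) (p : nat)
    (k : {group gT} -> rat) : Prop :=
  forall a : {group gT}, a \in Fobj G p ->
    (\sum_(b : {group gT} | b \in Fobj G p) (Fhom G a b)%:R * k b = 1)%R.

Definition is_coweighting (gT : finGroupType) (G : {group gT}) (p : nat)
    (k : {group gT} -> rat) : Prop :=
  forall b : {group gT}, b \in Fobj G p ->
    (\sum_(a : {group gT} | a \in Fobj G p) k a * (Fhom G a b)%:R = 1)%R.

Definition wsum (gT : finGroupType) (G : {group gT}) (p : nat)
    (k : {group gT} -> rat) : rat :=
  (\sum_(b : {group gT} | b \in Fobj G p) k b)%R.

(* Main.v *)
Require Import Defs.
From mathcomp Require Import all_boot all_order all_algebra all_fingroup all_solvable.
Import GRing.Theory Num.Theory.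
From mathcomp Require Import zify ring.
Set Implicit Arguments. Unset Strict Implicit. Unset Printing Implicit Defensive.


Section Toggle.
Variable T : finType.
Definition tog (z : T) (s : {set T}) := if z \in s then s :\ z else z |: s.

Lemma togK z : involutive (tog z).
Proof.
move=> s; rewrite {2}/tog; case: ifP => zs; rewrite /tog.
  by rewrite setD11 setD1K.
by rewrite setU11 setU1K ?zs.
Qed.

Lemma sgn_tog z s : ((-1) ^+ #|tog z s| = - (-1) ^+ #|s| :> int)%R.
Proof.
rewrite /tog; case: ifP => zs.
  by rewrite -[in RHS](setD1K zs) cardsU1 !inE eqxx /= exprS mulN1r opprK.
by rewrite cardsU1 zs /= exprS mulN1r.
Qed.

Lemma toggle_sum z (P : pred {set T}) (w : {set T} -> int) :
  (forall s, P s -> P (tog z s)) -> (forall s, P s -> w (tog z s) = - w s)%R ->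
  (\sum_(s | P s) w s = 0)%R.
Proof.
move=> HP Hw.
have E : (\sum_(s | P s) w s = \sum_(s | P s) - w s)%R.
  rewrite (reindex_inj (can_inj (togK z))) /=.
  apply: eq_big => [s|s Ps]; last first.
    by rewrite Hw // -(togK z s); apply: HP.
  apply/idP/idP; first by move/HP; rewrite togK.
  exact: HP.
move: E; rewrite sumrN => E.
have : (2 * \sum_(s | P s) w s = 0)%R by rewrite mulr2n mulrDl mul1r {2}E subrr.
by move/eqP; rewrite mulf_eq0 /= => /eqP.
Qed.
End Toggle.

Section Chains.
Variable gT : finGroupType.
Implicit Types (A s : {set {group gT}}) (a b x y z : {group gT}).

Definition cmp a b := (a \subset b) || (b \subset a).
Definition is_chain A s :=
  (s \subset A) && [forall a in s, forall b in s, cmp a b].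
Definition sgn s : int := ((-1) ^+ #|s|)%R.
Definition Sig A : int := (\sum_(s | is_chain A s) sgn s)%R.

Lemma is_chainP A s : reflect (s \subset A /\ {in s &, forall a b, cmp a b}) (is_chain A s).
Proof.
apply: (iffP andP) => [[sA /forall_inP H]|[sA H]]; split => //.
  by move=> a b ia ib; move/forall_inP: (H a ia); apply.
by apply/forall_inP => a ia; apply/forall_inP => b ib; apply: H.
Qed.

Lemma cmpC a b : cmp a b = cmp b a.
Proof. by rewrite /cmp orbC. Qed.

Lemma cmp_refl a : cmp a a.
Proof. by rewrite /cmp subxx. Qed.

Lemma chain_tog A s z : z \in A -> {in s, forall y, cmp y z} ->
  is_chain A s -> is_chain A (tog z s).
Proof.
move=> zA Hz /is_chainP[sA Hs]; apply/is_chainP; split.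
  rewrite /tog; case: ifP => _; first by rewrite subDset subsetU ?sA ?orbT.
  by rewrite subUset sub1set zA sA.
have H : forall y, y \in tog z s -> y = z \/ y \in s.
  move=> y; rewrite /tog; case: ifP => _; rewrite !inE; first by case/andP; right.
  by case/orP => [/eqP|]; [left|right].
move=> a b /H[->|ia] /H[->|ib]; rewrite ?cmp_refl //.
- by rewrite cmpC Hz.
- by rewrite Hz.
- exact: Hs.
Qed.

Lemma Sig_cone A z : z \in A -> {in A, forall y, cmp y z} -> Sig A = 0%R.
Proof.
move=> zA Hz; rewrite /Sig; apply: (toggle_sum (z := z)).
  move=> s cs; apply: chain_tog => // y ys; apply: Hz.
  by case/is_chainP: cs => sA _; apply: (subsetP sA).
by move=> s _; rewrite /sgn sgn_tog.
Qed.

Lemma Sig_remove A x z : x \in A -> z \in A -> z != x ->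
  {in A, forall y, cmp y x -> cmp y z} -> Sig A = Sig (A :\ x).
Proof.
move=> xA zA zx Hz; rewrite /Sig (bigID (fun s => x \in s)) /=.
rewrite [X in (X + _)%R](toggle_sum (z := z)) ?add0r; first last.
- by move=> s _; rewrite /sgn sgn_tog.
- move=> s /andP[cs xs]; apply/andP; split.
    apply: chain_tog => // y ys; apply: Hz.
      by case/is_chainP: cs => sA _; apply: (subsetP sA).
    by case/is_chainP: cs => _ H; apply: H.
  by rewrite /tog; case: ifP => _; rewrite !inE ?xs ?(negPf zx) ?orbT // eq_sym zx.
apply: eq_bigl => s; apply/andP/is_chainP => [[/is_chainP[sA H] xs]|[sA H]].
  split=> //; apply/subsetP => y ys; rewrite !inE (subsetP sA) // andbT.
  by apply: contraNneq xs => <-.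
split; last by apply/negP => xs; move: (subsetP sA x xs); rewrite !inE eqxx.
by apply/is_chainP; split=> //; apply: subset_trans sA (subsetDl _ _).
Qed.
End Chains.

Section Quillen.
Variable gT : finGroupType.
Implicit Types (A B s : {set {group gT}}) (a b x y z : {group gT}).

Lemma Sig_quillen A (Q : {group gT}) : Q \in A ->
  (forall a, a \in A -> (a <*> Q)%G \in A) -> Sig A = 0%R.
Proof.
move=> QA HA; set P' := [set a in A | Q \subset a].
have P'A : P' \subset A by apply/subsetP => a; rewrite inE => /andP[].
suff H : forall n B, P' \subset B -> B \subset A -> #|B :\: P'| = n -> Sig B = Sig P'.
  rewrite (H _ A P'A (subxx _) erefl); apply: (Sig_cone (z := Q)).
    by rewrite inE QA subxx.
  by move=> y; rewrite inE => /andP[_ Qy]; rewrite /cmp Qy orbT.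
elim=> [|n IH] B PB BA.
  move/eqP; rewrite cards_eq0 setD_eq0 => BP.
  by have -> : B = P' by apply/eqP; rewrite eqEsubset BP PB.
move=> cB.
have [x0 x0B] : exists x0, x0 \in B :\: P'.
  by apply/set0Pn; rewrite -card_gt0 cB.
case: (arg_maxnP (fun g : {group gT} => #|g|) x0B) => x xB xmax.
have {}xB : x \in B :\: P' := xB.
have xmax' : forall y, y \in B :\: P' -> #|y| <= #|x| := xmax.
have xB' : x \in B by move: xB; rewrite inE => /andP[].
have xA : x \in A := subsetP BA x xB'.
have nQx : ~~ (Q \subset x).
  by move: xB; rewrite !inE xA /= => /andP[].
set z := (x <*> Q)%G.
have zP : z \in P' by rewrite inE HA //= joing_subr.
have zx : z != x.
  by apply: contra nQx => /eqP <-; rewrite joing_subr.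
have xz : x \subset z by rewrite joing_subl.
rewrite (@Sig_remove _ B x z) //; last 2 first.
- by apply: (subsetP PB).
- move=> y yB; rewrite /cmp => /orP[yx|xy].
    by rewrite (subset_trans yx xz).
  case yP: (y \in P').
    by move: yP; rewrite inE => /andP[_ Qy]; rewrite join_subG xy Qy orbT.
  have yB' : y \in B :\: P' by rewrite inE yP yB.
  have := xmax' y yB'; move=> le_yx.
  have exy : x :=: y by apply/eqP; rewrite eqEcard xy le_yx.
  have -> : y = x by apply: val_inj; rewrite /= exy.
  by rewrite xz.
apply: IH.
- apply/subsetP => a aP; rewrite !inE (subsetP PB) // andbT.
  apply: contraTneq aP => ->; rewrite inE (negPf nQx) andbF //.
- by apply: subset_trans BA; apply: subsetDl.
have : #|B :\: P'| = #|(B :\ x) :\: P'|.+1.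
  rewrite (cardsD1 x (B :\: P')) xB add1n; congr (_.+1); apply: eq_card => a.
  by rewrite !inE; case: (a == x); rewrite ?andbF.
by rewrite cB => [[]].
Qed.
End Quillen.

Section StepB.
Local Open Scope group_scope.
Variables (aT : finGroupType) (Y : finType) (to : {action aT &-> Y}).
Variables (S : {group aT}) (f : Y -> int).
Hypothesis finv : forall y x, x \in S -> f (to y x) = f y.
Hypothesis fix0 : forall Q : {group aT}, Q \subset S -> Q :!=: 1 ->
  (\sum_(y | Q \subset 'C[y | to]) f y = 0)%R.

Local Definition gs (T : {set aT}) : int := (\sum_(y | 'C_S[y | to] == T) f y)%R.

Lemma sum_by_stab (P : pred {group aT}) :
  (\sum_(y | P ('C_S[y | to])%G) f y = \sum_(U : {group aT} | P U) gs U)%R.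
Proof.
rewrite (partition_big (fun y => ('C_S[y | to])%G) P) //=.
apply: eq_bigr => U PU; apply: eq_bigl => y.
apply/andP/eqP => [[_ /eqP e]|e]; first by rewrite -e.
have e' : ('C_S[y | to])%G = U by apply: val_inj.
by rewrite e' PU eqxx.
Qed.

Lemma gs_out (U : {group aT}) : ~~ (U \subset S) -> gs U = 0%R.
Proof.
move=> nUS; rewrite /gs big_pred0 // => y; apply: contraNF nUS => /eqP <-.
exact: subsetIl.
Qed.

Lemma gs0 : forall n (T : {group aT}), #|S| - #|T| < n -> T \subset S -> T :!=: 1 ->
  gs T = 0%R.
Proof.
elim=> // n IH T lt sTS nT1.
have := fix0 sTS nT1.
have -> : (\sum_(y | T \subset 'C[y | to]) f y =
           \sum_(y | T \subset ('C_S[y | to])%G) f y)%R.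
  by apply: eq_bigl => y; rewrite /= [in RHS]subsetI sTS.
rewrite (sum_by_stab (fun U : {group aT} => T \subset U)) (bigD1 T) //= big1 ?addr0 // => U /andP[sTU nUT].
case sUS: (U \subset S); last by rewrite gs_out ?sUS.
have pTU : T \proper U by rewrite properEneq sTU andbT; apply: contra nUT => /eqP e; apply/eqP; apply: val_inj.
apply: (IH U) => //.
- have := proper_card pTU; have := subset_leq_card sUS; have := subset_leq_card sTS. 
  move: lt; lia.
- by apply: contra nT1 => /eqP U1; rewrite -subG1 -U1.
Qed.

Lemma stepB : (#|S|%:Z %| (\sum_y f y)%R)%Z.
Proof.
have -> : (\sum_y f y = \sum_(y | predT ('C_S[y | to])%G) f y)%R by [].
rewrite sum_by_stab (bigD1 1%G) //= big1 ?addr0; last first.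
  move=> U nU1; case sUS: (U \subset S); last by rewrite gs_out ?sUS.
  by apply: (gs0 (n := (#|S| - #|U|).+1)) => //; apply/eqP => e; move/eqP: nU1; apply; apply: val_inj.
set Y0 := [set y | 'C_S[y | to] == 1].
have -> : gs 1 = (\sum_(y in Y0) f y)%R by apply: eq_bigl => y; rewrite inE.
have actY0 : [acts S, on Y0 | to].
  apply/subsetP => x xS; rewrite !inE /=; apply/subsetP => y; rewrite !inE.
  rewrite astab1_act => /eqP e; rewrite -{1}(conjGid xS) -conjIg.
  have -> : S :&: 'C[y | to] = 1 by [].
  by rewrite conjs1g.
have partY := orbit_partition actY0.
rewrite -(cover_partition partY) big_trivIset; last by case/and3P: partY.
apply: rpred_sum => O /imsetP[y yY0 ->].
have -> : (\sum_(w in orbit to S y) f w = \sum_(w in orbit to S y) f y)%R.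
  by apply: eq_bigr => w /imsetP[x xS ->]; rewrite finv.
rewrite sumr_const card_orbit.
move: yY0; rewrite inE => /eqP ->; rewrite indexg1.
by rewrite -mulr_natr; apply: dvdz_mull; rewrite natz dvdzz.
Qed.
End StepB.


Section GroupFacts.
Variable gT : finGroupType.
Local Open Scope group_scope.
Implicit Types (A a b : {set gT}) (H K G : {group gT}).

Lemma rcosets_partition_mulS (H : {group gT}) (A : {set gT}) :
  partition (rcosets H A) (H * A).
Proof.
set HG := H * A; have sGHG: {subset A <= HG} by apply/subsetP/mulG_subr.
have defHx x: x \in HG -> [set y in HG | rcoset H x == rcoset H y] = H :* x.
  move=> HGx; apply/setP=> y; rewrite inE !rcosetE (sameP eqP rcoset_eqP).
  by rewrite rcoset_sym; apply/andb_idl/subsetP; rewrite mulGS sub1set.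
have:= preim_partitionP (rcoset H) HG; congr (partition _ _); apply/setP=> Hx.
apply/imsetP/idP=> [[x HGx ->] | ]; first by rewrite defHx // mem_rcosets.
by case/rcosetsP=> x /sGHG-HGx ->; exists x; rewrite ?defHx.
Qed.

Lemma Fhom_card G a b : a \subset G ->
  (Fhom G a b * #|'C_G(a)|)%N = #|Ntrans G a b|.
Proof.
move=> aG; rewrite /Fhom.
have e : 'C_G(a) * Ntrans G a b = Ntrans G a b.
  apply/eqP; rewrite eqEsubset mulG_subr andbT; apply/subsetP => y /mulsgP[c n cC nN ->].
  move: cC nN; rewrite !inE => /andP[cG ca] /andP[nG an].
  rewrite groupM //= conjsgM.
  have -> : a :^ c = a by apply/normP; apply: (subsetP (cent_sub a)).
  by [].
rewrite -{2}e (card_uniform_partition (n := #|'C_G(a)|) _ (rcosets_partition_mulS _ _)) //.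
by move=> _ /rcosetsP[x _ ->]; rewrite card_rcoset.
Qed.

Lemma Ntrans_sum G a b : #|Ntrans G a b| = (\sum_(x in G) (a :^ x \subset b))%N.
Proof.
rewrite /Ntrans -sum1dep_card big_mkcond [in RHS]big_mkcond /=.
by apply: eq_bigr => x _; case: (x \in G); case: (a :^ x \subset b).
Qed.

Lemma centG_conj G a x : x \in G -> #|'C_G(a :^ x)| = #|'C_G(a)|.
Proof.
by move=> xG; rewrite centJ -{1}(conjGid xG) -conjIg cardJg.
Qed.

Lemma Fobj_conj G p (a : {group gT}) x : x \in G -> a \in Fobj G p -> (a :^ x)%G \in Fobj G p.
Proof.
move=> xG; rewrite !inE /= => /and3P[aG pa a1].
by rewrite pgroupJ pa conjsg_eq1 a1 -(conjGid xG) conjSg aG.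
Qed.
End GroupFacts.


Section ChainExt.
Variable gT : finGroupType.
Implicit Types (A s : {set {group gT}}) (a b x y z : {group gT}).

Lemma grp_eq a b : a \subset b -> #|b| <= #|a| -> a = b.
Proof. by move=> ab ba; apply: val_inj; apply/eqP; rewrite eqEcard ab ba. Qed.

Lemma chain_min A s : is_chain A s -> s != set0 ->
  exists2 b, b \in s & {in s, forall y, b \subset y}.
Proof.
case/is_chainP => _ H /set0Pn[b0 b0s].
case: (arg_minnP (fun g : {group gT} => #|g|) b0s) => b bs bmin.
exists b => // y ys; case/orP: (H b y bs ys) => // yb.
by rewrite (grp_eq yb (bmin y ys)) subxx.
Qed.

Lemma chain_max A s : is_chain A s -> s != set0 ->
  exists2 b, b \in s & {in s, forall y, y \subset b}.
Proof.
case/is_chainP => _ H /set0Pn[b0 b0s].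
case: (arg_maxnP (fun g : {group gT} => #|g|) b0s) => b bs bmax.
exists b => // y ys; case/orP: (H b y bs ys) => // yb.
by rewrite -(grp_eq yb (bmax y ys)) subxx.
Qed.

Lemma min_uniq s b0 : b0 \in s -> {in s, forall y, b0 \subset y} ->
  forall b, (b \in s) && [forall y in s, b \subset y] = (b == b0).
Proof.
move=> b0s H b; apply/andP/eqP => [[bs /forall_inP Hb]|->]; last first.
  by split=> //; apply/forall_inP.
apply: grp_eq; first exact: Hb.
by apply: subset_leq_card; apply: H.
Qed.

Lemma max_uniq s b0 : b0 \in s -> {in s, forall y, y \subset b0} ->
  forall b, (b \in s) && [forall y in s, y \subset b] = (b == b0).
Proof.
move=> b0s H b; apply/andP/eqP => [[bs /forall_inP Hb]|->]; last first.
  by split=> //; apply/forall_inP.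
apply/esym/grp_eq; first exact: Hb.
by apply: subset_leq_card; apply: H.
Qed.

End ChainExt.


Section Main.
Variables (gT : finGroupType) (G : {group gT}) (p : nat).
Implicit Types (A s : {set {group gT}}) (a b x y z : {group gT}).

Definition Fs : {set {group gT}} := [set a : {group gT} | a \in Fobj G p].
Definition cc s : nat := #|[set g in G | [forall a in s, g \in 'C(a)%g]]|.
Definition wt s : int := (- sgn s * (cc s)%:Z)%R.

Lemma cc_max s a : a \in s -> {in s, forall y, y \subset a} -> cc s = #|'C_G(a)%g|.
Proof.
move=> as_ H; rewrite /cc; apply: eq_card => g; rewrite !inE.
case: (g \in G) => //=; apply/forall_inP/idP => [Hg|ga y ys]; first exact: Hg.
by apply: (subsetP (centS (H y ys))).
Qed.

Lemma cc_set1 a : cc [set a] = #|'C_G(a)%g|.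
Proof. by apply: cc_max; rewrite ?inE // => y; rewrite inE => /eqP ->. Qed.

Lemma cc0 : cc set0 = #|G|.
Proof.
rewrite /cc; apply: eq_card => g; rewrite !inE.
case: (g \in G) => //=; apply/forall_inP => y; rewrite inE. by [].
Qed.

Lemma cc_setU1 a s : s != set0 -> {in s, forall y, a \subset y} -> cc (a |: s) = cc s.
Proof.
case/set0Pn => y0 y0s H; rewrite /cc; apply: eq_card => g; rewrite !inE.
case: (g \in G) => //=; apply/forall_inP/forall_inP => [Hg y ys|Hg y].
  by apply: Hg; rewrite !inE ys orbT.
rewrite !inE => /orP[/eqP ->|]; last exact: Hg.
by apply: (subsetP (centS (H y0 y0s))); apply: Hg.
Qed.

Definition minc s b := (b \in s) && [forall y in s, b \subset y].
Definition maxc s b := (b \in s) && [forall y in s, y \subset b].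
Definition FW b : int := (\sum_(s | is_chain Fs s && minc s b) wt s)%R.
Definition HW a : int := (\sum_(s | is_chain Fs s && maxc s a) - sgn s)%R.

Lemma inner_min s (P : pred {group gT}) (F : int) : is_chain Fs s ->
  (\sum_(b | P b && (is_chain Fs s && minc s b)) F =
   if [exists b, P b && minc s b] then F else 0)%R.
Proof.
move=> cs; case: (altP (s =P set0)) => [->|sn0].
  rewrite big_pred0; last by move=> b; rewrite /minc inE /= !andbF.
  by case: existsP => [[b]|//]; rewrite /minc inE /= andbF.
case: (chain_min cs sn0) => b0 b0s Hb0.
have E : forall b, (minc s b) = (b == b0) by move=> b; apply: min_uniq.
rewrite (eq_bigl (fun b => (b == b0) && P b)); last first.
  by move=> b; rewrite cs E /= andbC.
case Pb0 : (P b0).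
  rewrite (eq_bigl (pred1 b0)); last by move=> b; rewrite /= andb_idr // => /eqP ->.
  by rewrite big_pred1_eq; case: existsP => // [[]]; exists b0; rewrite Pb0 E eqxx.
rewrite (eq_bigl xpred0) ?big_pred0_eq; last by move=> b; case: eqP => // ->; rewrite Pb0.
by case: existsP => // [[b]]; rewrite E => /andP[Pb /eqP e]; move: Pb; rewrite e Pb0.
Qed.

Lemma inner_max s (P : pred {group gT}) (F : int) : is_chain Fs s ->
  (\sum_(b | P b && (is_chain Fs s && maxc s b)) F =
   if [exists b, P b && maxc s b] then F else 0)%R.
Proof.
move=> cs; case: (altP (s =P set0)) => [->|sn0].
  rewrite big_pred0; last by move=> b; rewrite /maxc inE /= !andbF.
  by case: existsP => [[b]|//]; rewrite /maxc inE /= andbF.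
case: (chain_max cs sn0) => b0 b0s Hb0.
have E : forall b, (maxc s b) = (b == b0) by move=> b; apply: max_uniq.
rewrite (eq_bigl (fun b => (b == b0) && P b)); last first.
  by move=> b; rewrite cs E /= andbC.
case Pb0 : (P b0).
  rewrite (eq_bigl (pred1 b0)); last by move=> b; rewrite /= andb_idr // => /eqP ->.
  by rewrite big_pred1_eq; case: existsP => // [[]]; exists b0; rewrite Pb0 E eqxx.
rewrite (eq_bigl xpred0) ?big_pred0_eq; last by move=> b; case: eqP => // ->; rewrite Pb0.
by case: existsP => // [[b]]; rewrite E => /andP[Pb /eqP e]; move: Pb; rewrite e Pb0.
Qed.

Lemma chain0 A : is_chain A set0.
Proof. by apply/is_chainP; split; [apply: sub0set | move=> ?; rewrite inE]. Qed.

Lemma chain_sub A s : is_chain A s -> s \subset A.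
Proof. by case/is_chainP. Qed.

Lemma setU1_tog (a : {group gT}) s : a |: tog a s = a |: s.
Proof.
rewrite /tog; case: ifP => as_; apply/setP => x; rewrite !inE;
  case: eqP => //= ->; rewrite ?as_ ?eqxx.
Qed.

Lemma Fs_in a : (a \in Fs) = (a \in Fobj G p).
Proof. by rewrite /Fs inE. Qed.

Lemma FW_sum a : a \in Fobj G p ->
  (\sum_(b | (b \in Fobj G p) && (a \subset b)) FW b = #|'C_G(a)%g|%:Z)%R.
Proof.
move=> aF; rewrite /FW (exchange_big_dep (is_chain Fs)) /=; last by move=> b s _ /andP[].
rewrite (eq_bigr (fun s => if [exists b, ((b \in Fobj G p) && (a \subset b)) && minc s b]
   then wt s else 0%R)); last by move=> s cs; rewrite inner_min.
set Ua := [set b in Fs | a \subset b].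
have aU : a \in Ua by rewrite /Ua inE Fs_in aF subxx.
have Ech : forall s, is_chain Ua s = is_chain Fs s && [forall y in s, a \subset y].
  move=> s; apply/is_chainP/andP => [[sU H]|[/is_chainP[sF H] /forall_inP Ha]].
    split; first by apply/is_chainP; split=> //; apply/subsetP => y ys;
      move: (subsetP sU y ys); rewrite /Ua inE => /andP[].
    by apply/forall_inP => y ys; move: (subsetP sU y ys); rewrite /Ua inE => /andP[].
  split=> //; apply/subsetP => y ys; rewrite /Ua inE (subsetP sF) //=; exact: Ha.
have Eex : forall s, is_chain Fs s ->
    [exists b, ((b \in Fobj G p) && (a \subset b)) && minc s b] =
    (s != set0) && [forall y in s, a \subset y].
  move=> s cs; case: (altP (s =P set0)) => [->|sn0] /=.
    by apply/existsP => [[b]]; rewrite /minc in_set0 /= andbF.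
  case: (chain_min cs sn0) => b0 b0s Hb0.
  have E : forall b, (minc s b) = (b == b0) by move=> b; apply: min_uniq.
  apply/existsP/forall_inP => [[b /andP[/andP[_ ab] /[!E] /eqP eb]] y ys|H].
    by apply: subset_trans (Hb0 y ys); rewrite -eb.
  exists b0; rewrite E eqxx andbT H //.
  by rewrite -Fs_in (subsetP (chain_sub cs)).
rewrite (eq_bigr (fun s => if (is_chain Ua s && (s != set0)) then wt s else 0%R)); last first.
  by move=> s cs; rewrite Eex // Ech cs /= andbC.
rewrite -big_mkcondr /=.
rewrite (eq_bigl (fun s => is_chain Ua s && (s != set0))); last first.
  by move=> s; rewrite Ech; case: (is_chain Fs s).
rewrite (eq_bigr (fun s => - sgn s * (cc (a |: s))%:Z)%R); last first.
  move=> s /andP[cs sn0]; rewrite /wt cc_setU1 //.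
  by move=> y ys; move: (subsetP (chain_sub cs) y ys); rewrite !inE => /andP[].
have T0 : (\sum_(s | is_chain Ua s) - sgn s * (cc (a |: s))%:Z = 0)%R.
  apply: (toggle_sum (z := a)).
    move=> s cs; apply: chain_tog => // y ys.
    by move: (subsetP (chain_sub cs) y ys); rewrite !inE /cmp => /andP[_ ->]; rewrite orbT.
  by move=> s _; rewrite /sgn sgn_tog setU1_tog !mulNr !opprK.
move: T0; rewrite (bigD1 set0) ?chain0 //= => /eqP; rewrite addrC addr_eq0 => /eqP ->.
by rewrite setU0 cc_set1 /sgn cards0 expr0 mulN1r opprK.
Qed.

Lemma HW_sum b : b \in Fobj G p ->
  (\sum_(a | (a \in Fobj G p) && (a \subset b)) HW a = 1)%R.
Proof.
move=> bF; rewrite /HW (exchange_big_dep (is_chain Fs)) /=; last by move=> a s _ /andP[].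
rewrite (eq_bigr (fun s => if [exists a, ((a \in Fobj G p) && (a \subset b)) && maxc s a]
   then (- sgn s)%R else 0%R)); last by move=> s cs; rewrite inner_max.
set Db := [set a in Fs | a \subset b].
have bD : b \in Db by rewrite /Db inE Fs_in bF subxx.
have Ech : forall s, is_chain Db s = is_chain Fs s && [forall y in s, y \subset b].
  move=> s; apply/is_chainP/andP => [[sU H]|[/is_chainP[sF H] /forall_inP Ha]].
    split; first by apply/is_chainP; split=> //; apply/subsetP => y ys;
      move: (subsetP sU y ys); rewrite /Db inE => /andP[].
    by apply/forall_inP => y ys; move: (subsetP sU y ys); rewrite /Db inE => /andP[].
  split=> //; apply/subsetP => y ys; rewrite /Db inE (subsetP sF) //=; exact: Ha.
have Eex : forall s, is_chain Fs s ->
    [exists a, ((a \in Fobj G p) && (a \subset b)) && maxc s a] =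
    (s != set0) && [forall y in s, y \subset b].
  move=> s cs; case: (altP (s =P set0)) => [->|sn0] /=.
    by apply/existsP => [[a]]; rewrite /maxc in_set0 /= andbF.
  case: (chain_max cs sn0) => b0 b0s Hb0.
  have E : forall a, (maxc s a) = (a == b0) by move=> a; apply: max_uniq.
  apply/existsP/forall_inP => [[a /andP[/andP[_ ab] /[!E] /eqP eb]] y ys|H].
    by apply: subset_trans (Hb0 y ys) _; rewrite -eb.
  exists b0; rewrite E eqxx andbT H //.
  by rewrite -Fs_in (subsetP (chain_sub cs)).
rewrite (eq_bigr (fun s => if (is_chain Db s && (s != set0)) then (- sgn s)%R else 0%R)); last first.
  by move=> s cs; rewrite Eex // Ech cs /= andbC.
rewrite -big_mkcondr /=.
rewrite (eq_bigl (fun s => is_chain Db s && (s != set0))); last first.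
  by move=> s; rewrite Ech; case: (is_chain Fs s).
have T0 : Sig Db = 0%R.
  apply: (Sig_cone (z := b)) => // y.
  by rewrite /Db inE /cmp => /andP[_ ->].
move: T0; rewrite /Sig (bigD1 set0) ?chain0 //= sumrN => /eqP; rewrite addrC addr_eq0 => /eqP ->.
by rewrite /sgn cards0 expr0 opprK.
Qed.

Lemma HW_total :
  (\sum_(a | a \in Fobj G p) #|'C_G(a)%g|%:Z * HW a =
   \sum_(s | is_chain Fs s && (s != set0)) wt s)%R.
Proof.
rewrite (eq_bigr (fun a => (\sum_(s | is_chain Fs s && maxc s a) wt s)%R)); last first.
  move=> a aF; rewrite /HW mulr_sumr; apply: eq_bigr => s /andP[cs /andP[as_ /forall_inP H]].
  by rewrite /wt (cc_max as_ H) mulrN mulNr mulrC.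
rewrite (exchange_big_dep (is_chain Fs)) /=; last by move=> a s _ /andP[].
rewrite (eq_bigr (fun s => if [exists a, (a \in Fobj G p) && maxc s a]
   then wt s else 0%R)); last by move=> s cs; rewrite inner_max.
rewrite [RHS]big_mkcondr /=; apply: eq_bigr => s cs.
case: (altP (s =P set0)) => [->|sn0] /=.
  by case: existsP => // [[a]]; rewrite /maxc in_set0 /= andbF.
case: (chain_max cs sn0) => b0 b0s Hb0.
case: existsP => // [[]]; exists b0; rewrite /maxc b0s.
rewrite -Fs_in (subsetP (chain_sub cs)) //=; exact/forall_inP.
Qed.
End Main.


Section Weights.
Variables (gT : finGroupType) (G : {group gT}) (p : nat).
Implicit Types (A s : {set {group gT}}) (a b x y z : {group gT}).
Local Open Scope ring_scope.

Lemma Fobj_sub a : a \in Fobj G p -> (a \subset G)%g.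
Proof. by rewrite inE => /and3P[]. Qed.

Lemma Fhom_rat a b : a \in Fobj G p ->
  (Fhom G a b)%:R = (#|Ntrans G a b|)%:R / (#|'C_G(a)%g|)%:R :> rat.
Proof.
move=> aF; rewrite -(Fhom_card b (Fobj_sub aF)) natrM mulfK //.
by rewrite pnatr_eq0 -lt0n cardG_gt0.
Qed.

Lemma Nsum_r a (F : {group gT} -> rat) :
  \sum_(b | b \in Fobj G p) (#|Ntrans G a b|)%:R * F b =
  \sum_(x in G) \sum_(b | (b \in Fobj G p) && (a :^ x \subset b)%g) F b.
Proof.
under eq_bigr => b _ do rewrite Ntrans_sum natr_sum mulr_suml.
rewrite exchange_big /=; apply: eq_bigr => x xG.
rewrite [RHS]big_mkcondr /=; apply: eq_bigr => b _.
by case: (a :^ x \subset b)%g; rewrite ?mul1r ?mul0r.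
Qed.

Lemma Nsum_l b (F : {group gT} -> rat) :
  \sum_(a | a \in Fobj G p) F a * (#|Ntrans G a b|)%:R =
  \sum_(x in G) \sum_(a | (a \in Fobj G p) && (a :^ x \subset b)%g) F a.
Proof.
under eq_bigr => a _ do rewrite Ntrans_sum natr_sum mulr_sumr.
rewrite exchange_big /=; apply: eq_bigr => x xG.
rewrite [RHS]big_mkcondr /=; apply: eq_bigr => a _.
by case: (a :^ x \subset b)%g; rewrite ?mulr1 ?mulr0.
Qed.

Definition fw b : rat := (FW G p b)%:~R / (#|G|)%:R.
Definition co a : rat := (#|'C_G(a)%g|)%:R * (HW G p a)%:~R / (#|G|)%:R.

Lemma G_neq0 : (#|G|)%:R != 0 :> rat.
Proof. by rewrite pnatr_eq0 -lt0n cardG_gt0. Qed.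

Lemma fw_weighting : is_weighting G p fw.
Proof.
move=> a aF.
have cne0 : (#|'C_G(a)%g|)%:R != 0 :> rat by rewrite pnatr_eq0 -lt0n cardG_gt0.
under eq_bigr => b _ do rewrite Fhom_rat // mulrAC.
rewrite -mulr_suml Nsum_r.
rewrite (eq_bigr (fun x : gT => (#|'C_G(a)%g|)%:R / (#|G|)%:R : rat)); last first.
  move=> x xG; rewrite /fw -mulr_suml -rmorph_sum /=.
  by rewrite (FW_sum (Fobj_conj (a := a) xG aF)) centG_conj.
by rewrite sumr_const -(mulr_natr (_ / _) #|G|) mulfVK ?G_neq0 // divff.
Qed.

Lemma co_coweighting : is_coweighting G p co.
Proof.
move=> b bF.
have E : forall a, a \in Fobj G p -> co a * (Fhom G a b)%:R =
    (HW G p a)%:~R / (#|G|)%:R * (#|Ntrans G a b|)%:R.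
  move=> a aF; rewrite Fhom_rat // /co.
  have cne0 : (#|'C_G(a)%g|)%:R != 0 :> rat by rewrite pnatr_eq0 -lt0n cardG_gt0.
  by field; apply/andP; split => //; apply: G_neq0.
rewrite (eq_bigr _ E) Nsum_l.
rewrite (eq_bigr (fun x : gT => 1 / (#|G|)%:R : rat)); last first.
  move=> x xG.
  rewrite (eq_bigl (fun a => (a \in Fobj G p) && (a \subset b :^ x^-1)%g)); last first.
    by move=> a; rewrite sub_conjg.
  rewrite -mulr_suml -rmorph_sum /=.
  have bF' := Fobj_conj (a := b) (groupVr xG) bF.
  by rewrite (HW_sum bF').
by rewrite sumr_const -(mulr_natr (1 / _) #|G|) mul1r mulVf ?G_neq0.
Qed.
End Weights.


Section PairAction.
Variable gT : finGroupType.
Local Open Scope group_scope.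
Definition sconj (s : {set {group gT}}) (x : gT) : {set {group gT}} :=
  [set (a :^ x)%G | a in s].
Definition pact (y : {set {group gT}} * gT) (x : gT) := (sconj y.1 x, y.2 ^ x).

Lemma pact1 : pact^~ 1 =1 id.
Proof.
case=> s g; rewrite /pact /sconj /= conjg1; congr (_, _).
rewrite -[RHS]imset_id; apply: eq_imset => a; apply: val_inj; exact: conjsg1.
Qed.

Lemma pactM : forall y, act_morph pact y.
Proof.
case=> s g x1 x2; rewrite /pact /sconj /= conjgM; congr (_, _).
rewrite -imset_comp; apply: eq_imset => a; apply: val_inj; exact: conjsgM.
Qed.

Definition pA := TotalAction pact1 pactM.
End PairAction.

Section Integral.
Variables (gT : finGroupType) (G : {group gT}) (p : nat).
Implicit Types (s : {set {group gT}}) (a b : {group gT}).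

Definition cond (y : {set {group gT}} * gT) :=
  [&& is_chain (Fs G p) y.1, y.2 \in G & [forall a in y.1, y.2 \in 'C(a)%g]].
Definition fpair (y : {set {group gT}} * gT) : int :=
  if cond y then (- sgn y.1)%R else 0%R.

Lemma card_sconj s x : #|sconj s x| = #|s|.
Proof.
apply: card_imset => a b /(congr1 val) /= e; apply: val_inj; exact: conjsg_inj e.
Qed.

Lemma in_sconj s x a : ((a :^ x)%G \in sconj s x) = (a \in s).
Proof.
apply/imsetP/idP => [[b bs /(congr1 val) /= e]|as_]; last by exists a.
by have -> : a = b by apply: val_inj; apply: (conjsg_inj e).
Qed.

Lemma cond_act y x : x \in G -> cond y -> cond (pact y x).
Proof.
case: y => s g xG /and3P[/is_chainP[sF H] gG gC]; apply/and3P; split => /=.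
- apply/is_chainP; split.
    apply/subsetP => _ /imsetP[a as_ ->]; rewrite Fs_in; apply: Fobj_conj => //.
    by rewrite -Fs_in (subsetP sF).
  move=> _ _ /imsetP[a as_ ->] /imsetP[b bs ->]; rewrite /cmp /= !conjSg; exact: H.
- by rewrite groupJr.
- apply/forall_inP => _ /imsetP[a as_ ->] /=; rewrite centJ memJ_conjg.
  by move/forall_inP: gC; apply.
Qed.

Lemma fpair_act y x : x \in G -> fpair (pact y x) = fpair y.
Proof.
move=> xG; rewrite /fpair.
have -> : cond (pact y x) = cond y.
  apply/idP/idP; last exact: cond_act.
  move=> /(cond_act (groupVr xG)); by rewrite -pactM mulgV pact1.
by rewrite /sgn /= card_sconj.
Qed.

Lemma W_pairs : (\sum_(s | is_chain (Fs G p) s) wt G s = \sum_y fpair y)%R.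
Proof.
rewrite -(pair_big xpredT xpredT (fun s g => fpair (s, g))) /=.
rewrite big_mkcond /=; apply: eq_bigr => s _.
rewrite /fpair /cond /=; case: (is_chain _ s) => /=; last by rewrite big1.
rewrite -big_mkcond /= sumr_const /wt /cc.
rewrite -(mulr_natr (- sgn s)) natz; do 2 f_equal.
by apply: eq_card => g; rewrite inE.
Qed.
End Integral.

Section Fixed.
Variables (gT : finGroupType) (G : {group gT}) (p : nat) (Q : {group gT}).
Local Open Scope group_scope.
Hypotheses (QG : Q \subset G) (pQ : p.-group Q) (nQ1 : Q :!=: 1).
Implicit Types (s : {set {group gT}}) (a b : {group gT}).

Definition Ag g := [set a in Fs G p | (g \in 'C(a)) && (Q \subset 'N(a))].

Lemma Ag_quillen g : g \in 'C_G(Q) -> Sig (Ag g) = 0%R.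
Proof.
rewrite inE => /andP[gG gQ].
apply: (Sig_quillen (Q := Q)).
  by rewrite /Ag inE Fs_in !inE QG pQ nQ1 gQ normG.
move=> a; rewrite /Ag inE Fs_in !inE => /andP[/and3P[aG pa a1] /andP[ga Qna]].
have pj : p.-group (a <*> Q) by rewrite norm_joinEr // pgroupM pa pQ.
rewrite /= join_subG aG QG pj /=; apply/and3P; split.
- apply: contra nQ1 => /eqP e; rewrite -subG1 -e; exact: joing_subr.
- by rewrite centY !inE ga gQ.
- exact: subset_trans (joing_subr a Q) (normG _).
Qed.

Lemma fixed_char s g :
  ((Q \subset 'C[(s, g) | pA gT]) && cond G p (s, g)) =
  (g \in 'C_G(Q)) && is_chain (Ag g) s.
Proof.
apply/andP/andP => [[/subsetP HQ /and3P[/is_chainP[sF H] /= gG /forall_inP gC]]|].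
  have HQ' : forall x, x \in Q -> sconj s x = s /\ g ^ x = g.
    by move=> x /HQ /astab1P [-> ->].
  split.
    rewrite inE gG /=; apply/centP => x xQ; have [_ e] := HQ' x xQ.
    by rewrite /commute -{2}e conjgE !mulgA mulgV mul1g.
  apply/is_chainP; split=> //; apply/subsetP => a as_.
  rewrite /Ag inE (subsetP sF) //= gC //=.
  apply/subsetP => x xQ; have [e _] := HQ' x xQ.
  have ax : (a :^ x)%G \in s by rewrite -{1}e in_sconj.
  have := H a _ as_ ax; rewrite /cmp => /orP[ss|ss].
    have eq : a :^ x = a by apply/eqP; rewrite eq_sym eqEcard ss /= cardJg.
    by apply/normP.
  have eq : a :^ x = a by apply/eqP; rewrite eqEcard ss /= cardJg.
  by apply/normP.
rewrite inE => [[/andP[gG gQ] /is_chainP[sA H]]].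
have sF : s \subset Fs G p.
  by apply: subset_trans sA _; apply/subsetP => a; rewrite /Ag inE => /andP[].
split.
  apply/subsetP => x xQ; apply/astab1P; rewrite /= /pact /=; congr (_, _).
    rewrite /sconj -[RHS]imset_id; apply: eq_in_imset => a as_; apply: val_inj => /=.
    move: (subsetP sA a as_); rewrite /Ag inE => /andP[_ /andP[_ Qna]].
    by apply/normP; apply: (subsetP Qna).
  have c : commute g x by move/centP: gQ; apply.
  by rewrite conjgE c mulKg.
apply/and3P; split => //; first by apply/is_chainP.
apply/forall_inP => a as_; move: (subsetP sA a as_); rewrite /Ag inE.
by case/andP => _ /andP[].
Qed.

Lemma fix0 : (\sum_(y | Q \subset 'C[y | pA gT]) fpair G p y = 0)%R.
Proof.
rewrite big_mkcond /=.
rewrite (eq_bigr (fun y => if (y.2 \in 'C_G(Q)) && is_chain (Ag y.2) y.1 then (- sgn y.1)%R else 0%R)); last first.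
  case=> s g _; rewrite -fixed_char /fpair.
  by case: (Q \subset _); case: (cond _ _ _).
rewrite -(pair_big xpredT xpredT (fun s g =>
   if (g \in 'C_G(Q)) && is_chain (Ag g) s then (- sgn s)%R else 0%R)) /=.
rewrite exchange_big /=; apply: big1 => g _.
case gC: (g \in 'C_G(Q)) => /=; last by rewrite big1.
rewrite -big_mkcond /= sumrN.
by have := Ag_quillen gC; rewrite /Sig => ->; rewrite oppr0.
Qed.
End Fixed.


Unset Implicit Arguments.
Theorem corollary5p2 (gT : finGroupType) (G : {group gT}) (p : nat) :
  prime p ->
  (exists k : {group gT} -> rat, is_weighting G p k) /\
  (exists k : {group gT} -> rat, is_coweighting G p k) /\
  (forall k : {group gT} -> rat, is_weighting G p k ->
     exists z : int, ((#|G|`_p^')%:R * wsum G p k = z%:~R)%R).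
Proof.
move=> _; split; first by exists (fw G p); exact: fw_weighting.
split; first by exists (co G p); exact: co_coweighting.
move=> k kW.
have E1 : wsum G p k = (\sum_(a | a \in Fobj G p) co G p a)%R.
  rewrite /wsum.
  rewrite (eq_bigr (fun b : {group gT} => (\sum_(a | a \in Fobj G p) co G p a * (Fhom G a b)%:R) * k b)%R); last first.
    by move=> b bF; rewrite co_coweighting // mul1r.
  under eq_bigr => b _ do rewrite mulr_suml.
  rewrite exchange_big /=; apply: eq_bigr => a aF.
  rewrite (eq_bigr (fun b : {group gT} => co G p a * ((Fhom G a b)%:R * k b)))%R; last by move=> b _; rewrite mulrA.
  by rewrite -mulr_sumr kW // mulr1.
have E2 : (\sum_(a | a \in Fobj G p) co G p a =
    (\sum_(s | is_chain (Fs G p) s && (s != set0)) wt G s)%:~R / (#|G|)%:R)%R.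
  rewrite /co -mulr_suml -HW_total rmorph_sum /=; congr (_ / _)%R; apply: eq_bigr => a _.
  by rewrite intrM.
have E3 : (\sum_(s | is_chain (Fs G p) s && (s != set0)) wt G s =
    \sum_(s | is_chain (Fs G p) s) wt G s + (#|G|)%:Z)%R.
  rewrite [in RHS](bigD1 set0) ?chain0 //= /wt cc0 /sgn cards0 expr0 mulN1r addrAC addNr add0r.
  by [].
have [S sylS] := Sylow_exists p G.
have sSG : (S \subset G)%g := pHall_sub sylS.
have pS : (p.-group S)%g := pHall_pgroup sylS.
have cS : #|S| = #|G|`_p := card_Hall sylS.
have D : (#|S|%:Z %| (\sum_(s | is_chain (Fs G p) s) wt G s)%R)%Z.
  rewrite W_pairs; apply: (stepB (to := pA gT)).
    by move=> y x xS; apply: fpair_act; apply: (subsetP sSG).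
  move=> Q sQS nQ1; apply: fix0 => //.
    exact: subset_trans sQS sSG.
  exact: pgroupS sQS pS.
case/dvdzP: D => q Eq.
exists (q + (#|G|`_p^')%:Z)%R.
rewrite E1 E2 E3 Eq cS.
set Np := #|G|`_p; set Nq := #|G|`_p^'.
have NE : #|G| = (Np * Nq)%N by rewrite /Np /Nq partnC // cardG_gt0.
have n1 : ((Np)%:R != 0 :> rat)%R by rewrite pnatr_eq0 -lt0n part_gt0.
have n2 : ((Nq)%:R != 0 :> rat)%R by rewrite pnatr_eq0 -lt0n part_gt0.
have h : forall n : nat, ((n%:Z)%:~R = n%:R :> rat)%R by [].
rewrite NE rmorphD rmorphM /= natrM !h rmorphD /= h.
field.
by rewrite n1 n2.
Qed.
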